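(* Let $(H,\cdot,1,\Delta,\varepsilon,\lhd)$ be a left Post-Hopf algebra, and suppose that $\Delta$ is cocommutative or that $H$ is connected as a coalgebra. Then $(H,\cdot^{\mathrm{op}},1,\Delta^{\mathrm{cop}},\varepsilon,\lhd^{\mathrm{op}})$ is a right Post-Hopf algebra, where $x\cdot^{\mathrm{op}}y=y\cdot x$, $x\lhd^{\mathrm{op}}y=y\lhd x$ and $\Delta^{\mathrm{cop}}=\tau\circ\Delta$ with $\tau(a\otimes b)=b\otimes a$.
   Context: Sweedler notation $\Delta(x)=x^{(1)}\otimes x^{(2)}$. The convolution algebra $\mathrm{Hom}(H,\mathrm{End}(H))$ (relative to the coproduct in use) has product $(f\star g)(x)=f(x^{(1)})\circ g(x^{(2)})$ and unit $x\mapsto\varepsilon(x)\mathrm{Id}_H$. A left Post-Hopf algebra is a Hopf algebra with a coalgebra morphism $\lhd:H\otimes H\to H$ such that $x\lhd(y\cdot z)=(x^{(1)}\lhd y)\cdot(x^{(2)}\lhd z)$, $x\lhd(y\lhd z)=\big(x^{(1)}\cdot(x^{(2)}\lhd y)\big)\lhd z$, and $\alpha_\lhd(x)(y)=x\lhd y$ defines an invertible element of the convolution algebra. A right Post-Hopf algebra is a Hopf algebra with a coalgebra morphism $\rhd:H\otimes H\to H$ such that $(x\cdot y)\rhd z=(x\rhd z^{(1)})\cdot(y\rhd z^{(2)})$, $(x\rhd y)\rhd z=x\rhd\big((y\rhd z^{(1)})\cdot z^{(2)}\big)$, and $\gamma_\rhd(x)(y)=y\rhd x$ defines an invertible element of the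 convolution algebra. Connectedness: with $\rho(x)=x-\varepsilon(x)1$, $\tilde\Delta(x)=\Delta(x)-1\otimes x-x\otimes 1$ on $\ker\varepsilon$, $\tilde\Delta(1)=0$, $\tilde\Delta^{(0)}=\rho$, $\tilde\Delta^{(k)}=(\tilde\Delta\otimes\mathrm{Id}^{\otimes k-1})\circ\tilde\Delta^{(k-1)}$, $H$ is connected as a coalgebra if every $x$ satisfies $\tilde\Delta^{(n)}(x)=0$ for some $n$. *)

(* Defs.v *)
(* Elements of H^{⊗m} are represented as finite formal sums of pure
   tensors (a [seq (seq H)] whose entries have length m); two such sums are
   equal in H^{⊗m} iff every m-multilinear map into every K-module agrees on
   them (universal property of the tensor product). *)
From HB Require Import structures.
From mathcomp Require Import all_boot all_order all_algebra.
Set Implicit Arguments.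
Unset Strict Implicit.
Unset Printing Implicit Defensive.
Import GRing.Theory.
Local Open Scope ring_scope.

Section PostHopf.
Variables (K : fieldType) (H : lmodType K).

Definition linear_map (V : lmodType K) (f : H -> V) :=
  forall (a : K) (x y : H), f (a *: x + y) = a *: f x + f y.

Definition bilinear_map (V : lmodType K) (f : H -> H -> V) :=
  (forall y, linear_map (fun x => f x y)) /\ (forall x, linear_map (f x)).

Definition multilinear (m : nat) (V : lmodType K) (f : seq H -> V) :=
  forall (w : seq H) (i : nat) (a : K) (u v : H), size w = m -> (i < m)%N ->
    f (set_nth 0 w i (a *: u + v)) = a *: f (set_nth 0 w i u) + f (set_nth 0 w i v).

Definition teq (m : nat) (s t : seq (seq H)) :=
  forall (V : lmodType K) (f : seq H -> V), multilinear m f ->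
    \sum_(w <- s) f w = \sum_(w <- t) f w.

Definition tens2 (s : seq (H * H)) : seq (seq H) := [seq [:: p.1; p.2] | p <- s].

Variables (mul : H -> H -> H) (one : H) (cop : H -> seq (H * H)) (eps : H -> K).

Definition is_algebra :=
  bilinear_map mul /\ (forall x y z, mul x (mul y z) = mul (mul x y) z) /\
  (forall x, mul one x = x) /\ (forall x, mul x one = x).

Definition is_coalgebra :=
  (forall (a : K) x y, teq 2 (tens2 (cop (a *: x + y)))
      ([seq [:: a *: p.1; p.2] | p <- cop x] ++ tens2 (cop y))) /\
  (forall (a : K) x y, eps (a *: x + y) = a * eps x + eps y) /\
  (forall x, teq 3 [seq [:: q.1; q.2; p.2] | p <- cop x, q <- cop p.1]
                   [seq [:: p.1; q.1; q.2] | p <- cop x, q <- cop p.2]) /\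
  (forall x, \sum_(p <- cop x) eps p.1 *: p.2 = x) /\
  (forall x, \sum_(p <- cop x) eps p.2 *: p.1 = x).

Definition is_bialgebra :=
  is_algebra /\ is_coalgebra /\
  (forall x y, teq 2 (tens2 (cop (mul x y)))
      [seq [:: mul p.1 q.1; mul p.2 q.2] | p <- cop x, q <- cop y]) /\
  teq 2 (tens2 (cop one)) [:: [:: one; one]] /\
  (forall x y, eps (mul x y) = eps x * eps y) /\ eps one = 1.

Definition is_hopf :=
  is_bialgebra /\
  exists S : H -> H, linear_map S /\
    (forall x, \sum_(p <- cop x) mul (S p.1) p.2 = eps x *: one) /\
    (forall x, \sum_(p <- cop x) mul p.1 (S p.2) = eps x *: one).

(* t : H ⊗ H -> H is a coalgebra morphism (H ⊗ H with the tensor coalgebra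
   structure Δ(x⊗y) = (x1⊗y1)⊗(x2⊗y2), ε(x⊗y) = ε(x)ε(y)) *)
Definition coalg_morph2 (t : H -> H -> H) :=
  bilinear_map t /\
  (forall x y, teq 2 (tens2 (cop (t x y)))
      [seq [:: t p.1 q.1; t p.2 q.2] | p <- cop x, q <- cop y]) /\
  (forall x y, eps (t x y) = eps x * eps y).

(* alpha(x)(y) = x ◁ y is invertible in Hom(H, End H) for the convolution
   (f ⋆ g)(x) = f(x1) ∘ g(x2) with unit x ↦ ε(x) Id *)
Definition left_post_hopf (tri : H -> H -> H) :=
  is_hopf /\ coalg_morph2 tri /\
  (forall x y z, tri x (mul y z) = \sum_(p <- cop x) mul (tri p.1 y) (tri p.2 z)) /\
  (forall x y z, tri x (tri y z) = \sum_(p <- cop x) tri (mul p.1 (tri p.2 y)) z) /\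
  (exists beta : H -> H -> H, bilinear_map beta /\
     (forall x y, \sum_(p <- cop x) tri p.1 (beta p.2 y) = eps x *: y) /\
     (forall x y, \sum_(p <- cop x) beta p.1 (tri p.2 y) = eps x *: y)).

(* gamma(x)(y) = y ▷ x is invertible in Hom(H, End H) *)
Definition right_post_hopf (trr : H -> H -> H) :=
  is_hopf /\ coalg_morph2 trr /\
  (forall x y z, trr (mul x y) z = \sum_(p <- cop z) mul (trr x p.1) (trr y p.2)) /\
  (forall x y z, trr (trr x y) z = \sum_(p <- cop z) trr x (mul (trr y p.1) p.2)) /\
  (exists delta : H -> H -> H, bilinear_map delta /\
     (forall x y, \sum_(p <- cop x) trr (delta p.2 y) p.1 = eps x *: y) /\
     (forall x y, \sum_(p <- cop x) delta p.1 (trr y p.2) = eps x *: y)).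

Definition cocommutative :=
  forall x, teq 2 (tens2 (cop x)) [seq [:: p.2; p.1] | p <- cop x].

Definition rho (x : H) : H := x - eps x *: one.

(* reduced coproduct Δ̃, extended linearly with Δ̃(1) = 0, i.e. Δ̃(x) = Δ̃(ρ x) *)
Definition red_cop (x : H) : seq (H * H) :=
  cop (rho x) ++ [:: (- one, rho x); (- rho x, one)].

Fixpoint red_copn (n : nat) (x : H) : seq (seq H) :=
  match n with
  | 0 => [:: [:: rho x]]
  | k.+1 => flatten [seq [seq [:: p.1, p.2 & behead w] | p <- red_cop (head 0 w)]
                    | w <- red_copn k x]
  end.

Definition connected :=
  forall x, exists n, teq n.+1 (red_copn n x) [::].

End PostHopf.

Definition cop_op (K : fieldType) (H : lmodType K) (cop : H -> seq (H * H)) (x : H) :=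
  [seq (p.2, p.1) | p <- cop x].

(* Main.v *)
Require Import Defs.
From HB Require Import structures.
From mathcomp Require Import all_boot all_order all_algebra.
From Stdlib Require Import FunctionalExtensionality ClassicalEpsilon.
Set Implicit Arguments. Unset Strict Implicit. Unset Printing Implicit Defensive.
Import GRing.Theory.

Section Gen.
Local Open Scope ring_scope.
Variables (K : fieldType) (H : lmodType K).

Lemma lin0 (V : lmodType K) (f : H -> V) : linear_map f -> f 0 = 0.
Proof. move=> Hf; have := Hf 1 0 0; rewrite !scale1r addr0 => E.
by apply: (addrI (f 0)); rewrite addr0 -E. Qed.
Lemma linD (V : lmodType K) (f : H -> V) : linear_map f -> forall x y, f (x + y) = f x + f y.
Proof. by move=> Hf x y; have := Hf 1 x y; rewrite !scale1r. Qed.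
Lemma linZ (V : lmodType K) (f : H -> V) : linear_map f -> forall a x, f (a *: x) = a *: f x.
Proof. by move=> Hf a x; have := Hf a x 0; rewrite addr0 (lin0 Hf) addr0. Qed.
Lemma linN (V : lmodType K) (f : H -> V) : linear_map f -> forall x, f (- x) = - f x.
Proof. by move=> Hf x; rewrite -scaleN1r linZ // scaleN1r. Qed.
Lemma linB (V : lmodType K) (f : H -> V) : linear_map f -> forall x y, f (x - y) = f x - f y.
Proof. by move=> Hf x y; rewrite linD // linN. Qed.
Lemma lin_sum (V : lmodType K) (f : H -> V) I (r : seq I) (F : I -> H) : linear_map f ->
  f (\sum_(i <- r) F i) = \sum_(i <- r) f (F i).
Proof. move=> Hf; elim: r => [|a r IH]; first by rewrite !big_nil lin0.
by rewrite !big_cons linD // IH. Qed.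

Lemma ml2_bil (V : lmodType K) (f : seq H -> V) : multilinear 2 f ->
  bilinear_map (fun u v => f [:: u; v]).
Proof. move=> Hf; split.
- by move=> v a x y; have := Hf [:: x; v] 0%N a x y erefl erefl.
- by move=> u a x y; have := Hf [:: u; x] 1%N a x y erefl erefl.
Qed.

Lemma bil_ml2 (V : lmodType K) (F : H -> H -> V) : bilinear_map F ->
  multilinear 2 (fun w => F (nth 0 w 0) (nth 0 w 1)).
Proof. move=> [H1 H2] [|b [|c [|d w]]] // i a u v _.
case: i => [|[|i]] // _ /=; [exact: H1|exact: H2]. Qed.

Lemma ml3_tril (V : lmodType K) (f : seq H -> V) : multilinear 3 f ->
  forall u v, linear_map (fun x => f [:: x; u; v]) /\ linear_map (fun x => f [:: u; x; v])
   /\ linear_map (fun x => f [:: u; v; x]).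
Proof. move=> Hf u v; split; last split.
- by move=> a x y; have := Hf [:: x; u; v] 0%N a x y erefl erefl.
- by move=> a x y; have := Hf [:: u; x; v] 1%N a x y erefl erefl.
- by move=> a x y; have := Hf [:: u; v; x] 2%N a x y erefl erefl.
Qed.

Definition tril (V : lmodType K) (F : H -> H -> H -> V) :=
  forall u v, linear_map (fun x => F x u v) /\ linear_map (fun x => F u x v)
   /\ linear_map (fun x => F u v x).

Lemma tril_ml3 (V : lmodType K) (F : H -> H -> H -> V) : tril F ->
  multilinear 3 (fun w => F (nth 0 w 0) (nth 0 w 1) (nth 0 w 2)).
Proof. move=> HF [|b [|c [|d [|e w]]]] // i a u v _.
case: i => [|[|[|i]]] // _ /=.
- by have [H1 _] := HF c d; apply: H1.
- by have [_ [H2 _]] := HF b d; apply: H2.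
- by have [_ [_ H3]] := HF b c; apply: H3.
Qed.

Lemma teq2E s t : teq 2 s t -> forall (V : lmodType K) (F : H -> H -> V), bilinear_map F ->
  \sum_(w <- s) F (nth 0 w 0) (nth 0 w 1) = \sum_(w <- t) F (nth 0 w 0) (nth 0 w 1).
Proof. by move=> Hst V F HF; apply: Hst; apply: bil_ml2. Qed.

Lemma teq2P (s t : seq (H * H)) : teq 2 (tens2 s) (tens2 t) ->
  forall (V : lmodType K) (F : H -> H -> V), bilinear_map F ->
  \sum_(p <- s) F p.1 p.2 = \sum_(p <- t) F p.1 p.2.
Proof. move=> Hst V F HF; have := teq2E Hst HF; by rewrite !big_map. Qed.

Lemma teq3E s t : teq 3 s t -> forall (V : lmodType K) (F : H -> H -> H -> V), tril F ->
  \sum_(w <- s) F (nth 0 w 0) (nth 0 w 1) (nth 0 w 2)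
  = \sum_(w <- t) F (nth 0 w 0) (nth 0 w 1) (nth 0 w 2).
Proof. by move=> Hst V F HF; apply: Hst; apply: tril_ml3. Qed.

End Gen.


Section Main.
Local Open Scope ring_scope.
Variables (K : fieldType) (H : lmodType K).
Variables (mul : H -> H -> H) (one : H) (cop : H -> seq (H * H)) (eps : H -> K)
  (tri : H -> H -> H).
Hypothesis LP : left_post_hopf mul one cop eps tri.

Lemma alg_ : is_algebra mul one. Proof. by case: LP => [[[]]]. Qed.
Lemma coal_ : is_coalgebra cop eps. Proof. by case: LP => [[[_ []]]]. Qed.
Lemma bial_ : is_bialgebra mul one cop eps. Proof. by case: LP => [[]]. Qed.
Lemma mul_bil : bilinear_map mul. Proof. by case: alg_. Qed.
Lemma mulA x y z : mul x (mul y z) = mul (mul x y) z. Proof. by case: alg_ => _ []. Qed.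
Lemma mul1x x : mul one x = x. Proof. by case: alg_ => _ [_ []]. Qed.
Lemma mulx1 x : mul x one = x. Proof. by case: alg_ => _ [_ []]. Qed.
Lemma mull y : linear_map (fun x => mul x y). Proof. by case: mul_bil. Qed.
Lemma mulr x : linear_map (mul x). Proof. by case: mul_bil. Qed.
Lemma cop_lin_ a x y : teq 2 (tens2 (cop (a *: x + y)))
      ([seq [:: a *: p.1; p.2] | p <- cop x] ++ tens2 (cop y)).
Proof. by case: coal_. Qed.
Lemma eps_lin a x y : eps (a *: x + y) = a * eps x + eps y.
Proof. by case: coal_ => _ [E _]; rewrite E. Qed.
Lemma coass_ x : teq 3 [seq [:: q.1; q.2; p.2] | p <- cop x, q <- cop p.1]
                   [seq [:: p.1; q.1; q.2] | p <- cop x, q <- cop p.2].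
Proof. by case: coal_ => _ [_ []]. Qed.
Lemma counitL x : \sum_(p <- cop x) eps p.1 *: p.2 = x.
Proof. by case: coal_ => _ [_ [_ []]]. Qed.
Lemma counitR x : \sum_(p <- cop x) eps p.2 *: p.1 = x.
Proof. by case: coal_ => _ [_ [_ []]]. Qed.
Lemma copM_ x y : teq 2 (tens2 (cop (mul x y)))
      [seq [:: mul p.1 q.1; mul p.2 q.2] | p <- cop x, q <- cop y].
Proof. by case: bial_ => _ [_ []]. Qed.
Lemma cop1_ : teq 2 (tens2 (cop one)) [:: [:: one; one]].
Proof. by case: bial_ => _ [_ [_ []]]. Qed.
Lemma epsM x y : eps (mul x y) = eps x * eps y.
Proof. by case: bial_ => _ [_ [_ [_ []]]]. Qed.
Lemma eps1 : eps one = 1.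
Proof. by case: bial_ => _ [_ [_ [_ []]]]. Qed.
Lemma antipode_ : exists S : H -> H, linear_map S /\
    (forall x, \sum_(p <- cop x) mul (S p.1) p.2 = eps x *: one) /\
    (forall x, \sum_(p <- cop x) mul p.1 (S p.2) = eps x *: one).
Proof. by case: LP => [[]]. Qed.
Lemma tri_bil : bilinear_map tri. Proof. by case: LP => _ [[]]. Qed.
Lemma tril_ y : linear_map (fun x => tri x y). Proof. by case: tri_bil. Qed.
Lemma trir_ x : linear_map (tri x). Proof. by case: tri_bil. Qed.
Lemma tri_cop_ x y : teq 2 (tens2 (cop (tri x y)))
      [seq [:: tri p.1 q.1; tri p.2 q.2] | p <- cop x, q <- cop y].
Proof. by case: LP => _ [[_ []]]. Qed.
Lemma eps_tri x y : eps (tri x y) = eps x * eps y.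
Proof. by case: LP => _ [[_ []]]. Qed.
Lemma tri_mul x y z : tri x (mul y z) = \sum_(p <- cop x) mul (tri p.1 y) (tri p.2 z).
Proof. by case: LP => _ [_ []]. Qed.
Lemma tri_tri x y z : tri x (tri y z) = \sum_(p <- cop x) tri (mul p.1 (tri p.2 y)) z.
Proof. by case: LP => _ [_ [_ []]]. Qed.
Lemma beta_ : exists beta : H -> H -> H, bilinear_map beta /\
     (forall x y, \sum_(p <- cop x) tri p.1 (beta p.2 y) = eps x *: y) /\
     (forall x y, \sum_(p <- cop x) beta p.1 (tri p.2 y) = eps x *: y).
Proof. by case: LP => _ [_ [_ []]]. Qed.

Lemma cop_lin (V : lmodType K) (F : H -> H -> V) : bilinear_map F -> forall a x y,
  \sum_(p <- cop (a *: x + y)) F p.1 p.2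
   = a *: \sum_(p <- cop x) F p.1 p.2 + \sum_(p <- cop y) F p.1 p.2.
Proof. move=> HF a x y; have := teq2E (cop_lin_ a x y) HF.
rewrite big_cat !big_map /= => ->; congr (_ + _); rewrite scaler_sumr.
by apply: eq_bigr => p _; case: HF => H1 _; rewrite (linZ (H1 _)).
Qed.

Lemma cop_one (V : lmodType K) (F : H -> H -> V) : bilinear_map F ->
  \sum_(p <- cop one) F p.1 p.2 = F one one.
Proof. move=> HF; have := teq2E cop1_ HF; by rewrite big_map big_seq1. Qed.

Lemma coass (V : lmodType K) (F : H -> H -> H -> V) : tril F -> forall x,
  \sum_(p <- cop x) \sum_(q <- cop p.1) F q.1 q.2 p.2
  = \sum_(p <- cop x) \sum_(q <- cop p.2) F p.1 q.1 q.2.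
Proof. move=> HF x; have := teq3E (coass_ x) HF; by rewrite !big_allpairs_dep. Qed.

Lemma copM (V : lmodType K) (F : H -> H -> V) : bilinear_map F -> forall x y,
  \sum_(p <- cop (mul x y)) F p.1 p.2
  = \sum_(p <- cop x) \sum_(q <- cop y) F (mul p.1 q.1) (mul p.2 q.2).
Proof. move=> HF x y; have := teq2E (copM_ x y) HF; by rewrite big_map big_allpairs_dep. Qed.

Lemma tri_cop (V : lmodType K) (F : H -> H -> V) : bilinear_map F -> forall x y,
  \sum_(p <- cop (tri x y)) F p.1 p.2
  = \sum_(p <- cop x) \sum_(q <- cop y) F (tri p.1 q.1) (tri p.2 q.2).
Proof. move=> HF x y; have := teq2E (tri_cop_ x y) HF; by rewrite big_map big_allpairs_dep. Qed.

End Main.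


Section Op.
Local Open Scope ring_scope.
Variables (K : fieldType) (H : lmodType K).
Variables (mul : H -> H -> H) (one : H) (cop : H -> seq (H * H)) (eps : H -> K)
  (tri : H -> H -> H).
Hypothesis LP : left_post_hopf mul one cop eps tri.

Lemma swap_bil (V : lmodType K) (F : H -> H -> V) : bilinear_map F ->
  bilinear_map (fun u v => F v u).
Proof. by case=> H1 H2; split. Qed.

Lemma ml3_rev (V : lmodType K) (f : seq H -> V) : multilinear 3 f ->
  tril (fun a b c => f [:: c; b; a]).
Proof. move=> Hf u v; have [A1 [A2 A3]] := ml3_tril Hf v u; split; first exact: A3.
by split; [have [_ [B _]] := ml3_tril Hf v u | have [B _] := ml3_tril Hf v u]. Qed.

Lemma op_bial : is_bialgebra (fun x y => mul y x) one (cop_op cop) eps.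
Proof.
have [H1 H2] := mul_bil LP.
split.
  split; first by split.
  split; first by move=> x y z; rewrite (mulA LP).
  by split => x /=; [exact: (mulx1 LP) | exact: (mul1x LP)].
split; first split.
  move=> a x y V f Hf; have HF := ml2_bil Hf.
  rewrite /tens2 /cop_op big_cat !big_map /=.
  rewrite (cop_lin LP (swap_bil HF)) /=; congr (_ + _); rewrite scaler_sumr.
  by apply: eq_bigr => p _; case: HF => F1 _; rewrite (linZ (F1 _)).
split; first exact: eps_lin LP.
split.
  move=> x V f Hf; have HT := ml3_rev Hf.
  rewrite /cop_op !big_allpairs_dep !big_map /=.
  under eq_bigr do rewrite big_map /=.
  under [RHS]eq_bigr do rewrite big_map /=.
  by symmetry; exact: (coass LP HT x).
split=> x; rewrite /cop_op big_map /=; [exact: (counitR LP) | exact: (counitL LP)].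
split.
  move=> x y V f Hf; have HF := swap_bil (ml2_bil Hf).
  rewrite /tens2 /cop_op big_map big_allpairs_dep /= big_map.
  rewrite (copM LP HF) /= exchange_big /= big_map; apply: eq_bigr => p _.
  by rewrite big_map.
split.
  move=> V f Hf; have HF := swap_bil (ml2_bil Hf).
  by rewrite /tens2 /cop_op !big_map big_seq1 /= (cop_one LP HF).
split; last exact: (eps1 LP).
by move=> x y; rewrite (epsM LP) mulrC.
Qed.

Lemma op_hopf : is_hopf (fun x y => mul y x) one (cop_op cop) eps.
Proof.
split; first exact: op_bial.
have [S [HS [S1 S2]]] := antipode_ LP.
exists S; split; first exact: HS.
by split => x; rewrite /cop_op big_map /=; [exact: S2|exact: S1].
Qed.
End Op.


Section Op2.
Local Open Scope ring_scope.
Variables (K : fieldType) (H : lmodType K).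
Variables (mul : H -> H -> H) (one : H) (cop : H -> seq (H * H)) (eps : H -> K)
  (tri : H -> H -> H).
Hypothesis LP : left_post_hopf mul one cop eps tri.

Lemma op_morph : coalg_morph2 (cop_op cop) eps (fun x y => tri y x).
Proof.
have [T1 T2] := tri_bil LP.
split; first by split.
split.
  move=> x y V f Hf; have HF := swap_bil (ml2_bil Hf).
  rewrite /tens2 /cop_op big_map big_allpairs_dep /= big_map.
  rewrite (tri_cop LP HF) /= exchange_big /= big_map; apply: eq_bigr => p _.
  by rewrite big_map.
by move=> x y; rewrite (eps_tri LP) mulrC.
Qed.

Lemma op_ax3 x y z : tri z (mul y x)
   = \sum_(p <- cop_op cop z) mul (tri p.2 y) (tri p.1 x).
Proof. by rewrite (tri_mul LP) /cop_op big_map. Qed.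

Lemma op_ax4 x y z : tri z (tri y x)
   = \sum_(p <- cop_op cop z) tri (mul p.2 (tri p.1 y)) x.
Proof. by rewrite (tri_tri LP) /cop_op big_map. Qed.

Lemma op_delta_cocom : cocommutative cop ->
  exists delta : H -> H -> H, bilinear_map delta /\
     (forall x y, \sum_(p <- cop_op cop x) tri p.1 (delta p.2 y) = eps x *: y) /\
     (forall x y, \sum_(p <- cop_op cop x) delta p.1 (tri p.2 y) = eps x *: y).
Proof.
move=> CC; have [beta [[B1 B2] [Hb1 Hb2]]] := beta_ LP.
have [T1 T2] := tri_bil LP.
exists beta; split; first by split.
split=> x y; rewrite /cop_op big_map /=.
- have := teq2E (CC x) (F := fun u v => tri v (beta u y)) _.
  rewrite !big_map /= => ->; first exact: Hb1.
  split=> [v|u] a p q /=; first by rewrite (linD (B1 _)) (linZ (B1 _)) (linD (T2 _)) (linZ (T2 _)).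
  by rewrite (linD (T1 _)) (linZ (T1 _)).
- have := teq2E (CC x) (F := fun u v => beta v (tri u y)) _.
  rewrite !big_map /= => ->; first exact: Hb2.
  split=> [v|u] a p q /=; first by rewrite (linD (T1 _)) (linZ (T1 _)) (linD (B2 _)) (linZ (B2 _)).
  by rewrite (linD (B1 _)) (linZ (B1 _)).
Qed.
End Op2.


Section Conn.
Local Open Scope ring_scope.
Variables (K : fieldType) (H : lmodType K).
Variables (mul : H -> H -> H) (one : H) (cop : H -> seq (H * H)) (eps : H -> K)
  (tri : H -> H -> H).
Hypothesis LP : left_post_hopf mul one cop eps tri.

Let ML := mull LP.
Let MR := mulr LP.
Let TL := tril_ LP.
Let TR := trir_ LP.

Ltac linsimp := repeat first
  [ rewrite (linD (ML _)) | rewrite (linZ (ML _)) | rewrite (linD (MR _)) | rewrite (linZ (MR _))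
  | rewrite (linD (TL _)) | rewrite (linZ (TL _)) | rewrite (linD (TR _)) | rewrite (linZ (TR _)) ].

Lemma tri1 y : tri one y = y.
Proof.
have [S [HS [S1 S2]]] := antipode_ LP.
have [beta [[B1 B2] [Hb1 Hb2]]] := beta_ LP.
set e1 := tri one one.
have E1 : e1 = mul e1 e1.
  rewrite {1}/e1 -{2}(mul1x LP one) (tri_mul LP).
  by rewrite (cop_one LP (F := fun u v => mul (tri u one) (tri v one))) //; split=> ? ? ? ? /=; linsimp.
have E2 : mul (S e1) e1 = one.
  have := S1 e1; rewrite (eps_tri LP) (eps1 LP) mulr1 scale1r => <-.
  rewrite (tri_cop LP (F := fun u v => mul (S u) v)) /=; last first.
    by split=> ? ? ? ? /=; rewrite ?(linD HS) ?(linZ HS); linsimp.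
  rewrite (cop_one LP (F := fun u v => \sum_(q <- cop one) mul (S (tri u q.1)) (tri v q.2))).
    by rewrite (cop_one LP (F := fun u v => mul (S (tri one u)) (tri one v))) //;
      split=> ? ? ? ? /=; rewrite ?(linD HS) ?(linZ HS); linsimp; rewrite ?(linD HS) ?(linZ HS); linsimp.
  by split=> ? ? ? ? /=; rewrite scaler_sumr -big_split; apply: eq_bigr => q _ /=;
    linsimp; rewrite ?(linD HS) ?(linZ HS); linsimp.
have E3 : e1 = one.
  by rewrite -(mul1x LP e1) -{1}E2 -(mulA LP) -E1.
have E4 z : tri one (tri one z) = tri one z.
  rewrite (tri_tri LP) (cop_one LP (F := fun u v => tri (mul u (tri v one)) z)).
    by rewrite -/e1 E3 (mul1x LP).
  by split=> ? ? ? ? /=; linsimp.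
have E5 z : beta one (tri one z) = z.
  rewrite -[RHS]scale1r -(eps1 LP) -Hb2 (cop_one LP (F := fun u v => beta u (tri v z))) //.
  by split=> ? ? ? ? /=; rewrite ?(linD (B1 _)) ?(linZ (B1 _)); linsimp; rewrite ?(linD (B2 _)) ?(linZ (B2 _)).
by rewrite -{2}(E5 y) -E4 E5.
Qed.


Lemma linB2 (f h : H -> H) : linear_map f -> linear_map h -> linear_map (fun x => f x - h x).
Proof. by move=> Hf Hh a x y; rewrite Hf Hh scalerBr opprD addrACA. Qed.

Definition conv (f h : H -> H -> H) x y := \sum_(p <- cop x) f p.2 (h p.1 y).
Definition ee x (y : H) : H := eps x *: y.
Definition gg x (y : H) : H := tri x y - eps x *: y.

Lemma ee_bil : bilinear_map ee.
Proof.
split=> [v|u] a p q; rewrite /ee; first by rewrite (eps_lin LP) scalerDl scalerA.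
by rewrite scalerDr !scalerA mulrC.
Qed.

Lemma gg_bil : bilinear_map gg.
Proof.
have [E1 E2] := ee_bil.
by split=> [v|u]; apply: linB2; [exact: TL|exact: E1|exact: TR|exact: E2].
Qed.

Lemma conv_bil f h : bilinear_map f -> bilinear_map h -> bilinear_map (conv f h).
Proof.
move=> [F1 F2] [H1 H2]; split=> [y|x] a p q; rewrite /conv.
- rewrite (cop_lin LP (F := fun u v => f v (h u y))) //.
  by split=> [v|u] b r t /=; [rewrite (linD (H1 _)) (linZ (H1 _)) (linD (F2 _)) (linZ (F2 _))
     | rewrite (linD (F1 _)) (linZ (F1 _))].
- rewrite scaler_sumr -big_split; apply: eq_bigr => r _ /=.
  by rewrite (linD (H2 _)) (linZ (H2 _)) (linD (F2 _)) (linZ (F2 _)).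
Qed.

Lemma conv_ee_l h : bilinear_map h -> conv ee h = h.
Proof.
move=> [H1 H2]; apply: functional_extensionality => x; apply: functional_extensionality => y.
rewrite /conv /ee; transitivity (h (\sum_(p <- cop x) eps p.2 *: p.1) y);
  last by rewrite (counitR LP).
rewrite (lin_sum _ _ (H1 y)); apply: eq_bigr => p _.
by rewrite (linZ (H1 _)).
Qed.

Lemma conv_ee_r f : bilinear_map f -> conv f ee = f.
Proof.
move=> [F1 F2]; apply: functional_extensionality => x; apply: functional_extensionality => y.
rewrite /conv /ee; transitivity (f (\sum_(p <- cop x) eps p.1 *: p.2) y);
  last by rewrite (counitL LP).
rewrite (lin_sum _ _ (F1 y)); apply: eq_bigr => p _.
by rewrite (linZ (F1 _)) (linZ (F2 _)).
Qed.

Lemma conv_assoc f h k : bilinear_map f -> bilinear_map h -> bilinear_map k ->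
  conv (conv f h) k = conv f (conv h k).
Proof.
move=> [F1 F2] [H1 H2] [K1 K2].
apply: functional_extensionality => x; apply: functional_extensionality => y.
rewrite /conv.
under [RHS]eq_bigr do rewrite (lin_sum _ _ (F2 _)).
symmetry; apply: (coass LP (F := fun a b c => f c (h b (k a y)))).
move=> u v; split; last split => b r t /=.
- by move=> b r t /=; rewrite (linD (K1 _)) (linZ (K1 _)) (linD (H2 _)) (linZ (H2 _))
      (linD (F2 _)) (linZ (F2 _)).
- by rewrite (linD (H1 _)) (linZ (H1 _)) (linD (F2 _)) (linZ (F2 _)).
- by rewrite (linD (F1 _)) (linZ (F1 _)).
Qed.

Lemma tri_split : tri = fun x y => ee x y + gg x y.
Proof.
apply: functional_extensionality => x; apply: functional_extensionality => y.
by rewrite /ee /gg addrC subrK.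
Qed.

Lemma conv_triL k x y : conv tri k x y = conv ee k x y + conv gg k x y.
Proof. by rewrite /conv -big_split tri_split. Qed.

Lemma conv_triR k x y : bilinear_map k -> conv k tri x y = conv k ee x y + conv k gg x y.
Proof. move=> [K1 K2]; rewrite /conv -big_split tri_split; apply: eq_bigr => p _.
by rewrite (linD (K2 _)). Qed.

Lemma gg1 y : gg one y = 0.
Proof. by rewrite /gg tri1 (eps1 LP) scale1r subrr. Qed.

Lemma conv_gg1 h y : bilinear_map h -> conv gg h one y = 0.
Proof.
move=> [H1 H2]; have [G1 G2] := gg_bil.
rewrite /conv (cop_one LP (F := fun u v => gg v (h u y))) ?gg1 //.
by split=> [v|u] b r t /=; [rewrite (linD (H1 _)) (linZ (H1 _)) (linD (G2 _)) (linZ (G2 _))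
     | rewrite (linD (G1 _)) (linZ (G1 _))].
Qed.

Definition Q n := iter n (conv gg) ee.

Lemma Q_bil n : bilinear_map (Q n).
Proof. elim: n => [|n IH] /=; [exact: ee_bil | exact: conv_bil gg_bil IH]. Qed.

Lemma QR n : conv (Q n) gg = Q n.+1.
Proof.
elim: n => [|n IH].
  by rewrite /Q /= (conv_ee_l gg_bil) (conv_ee_r gg_bil).
have -> : Q n.+2 = conv gg (Q n.+1) by [].
have -> : Q n.+1 = conv gg (Q n) by [].
by rewrite (conv_assoc gg_bil (Q_bil n) gg_bil) IH.
Qed.


Definition fl (z : H) (t : seq H) := foldl (fun acc a => gg a acc) z t.

Lemma fl_lin t : linear_map (fun z => fl z t).
Proof.
have [G1 G2] := gg_bil.
elim: t => [|b t IH] a z1 z2 //=.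
by rewrite /fl /= (linD (G2 b)) (linZ (G2 b)); apply: IH.
Qed.

Lemma fl_set t z k a u v : (k < size t)%N ->
  fl z (set_nth 0 t k (a *: u + v)) = a *: fl z (set_nth 0 t k u) + fl z (set_nth 0 t k v).
Proof.
have [G1 G2] := gg_bil.
elim: t z k => [|b t IH] z [|k] //= Hk.
  by rewrite /fl /= (linD (G1 z)) (linZ (G1 z)); apply: fl_lin.
by rewrite /fl /=; apply: IH.
Qed.

Definition Fh (h : H -> H -> H) (y : H) (w : seq H) := fl (h (head 0 w) y) (behead w).

Lemma Fh_ml h y n : bilinear_map h -> multilinear n.+1 (Fh h y).
Proof.
move=> [H1 H2] [|b t] // i a u v /= [Hs] Hi.
case: i Hi => [|i] Hi /=.
  by rewrite /Fh /= (linD (H1 y)) (linZ (H1 y)); apply: fl_lin.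
by rewrite /Fh /=; apply: fl_set; rewrite Hs.
Qed.

Lemma red_sum h v y : bilinear_map h -> (forall z, h one z = 0) ->
  \sum_(q <- red_cop one cop eps v) gg q.2 (h q.1 y) = conv gg h v y.
Proof.
move=> [H1 H2] h1; have [G1 G2] := gg_bil.
rewrite /red_cop big_cat /= !big_cons big_nil.
rewrite (linN (H1 y)) h1 oppr0 (lin0 (G2 _)) gg1 !addr0.
have -> : rho one eps v = (- eps v) *: one + v by rewrite /rho scaleNr addrC.
rewrite (cop_lin LP (F := fun u w => gg w (h u y))); last first.
  by split=> [w|u] b r t /=; [rewrite (linD (H1 _)) (linZ (H1 _)) (linD (G2 _)) (linZ (G2 _))
     | rewrite (linD (G1 _)) (linZ (G1 _))].
rewrite (cop_one LP (F := fun u w => gg w (h u y))) /= ?h1 ?(lin0 (G2 _)) ?scaler0 ?add0r //.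
by split=> [w|u] b r t /=; [rewrite (linD (H1 _)) (linZ (H1 _)) (linD (G2 _)) (linZ (G2 _))
     | rewrite (linD (G1 _)) (linZ (G1 _))].
Qed.

Lemma red_iter n x y h : bilinear_map h -> (forall z, h one z = 0) ->
  \sum_(w <- red_copn one cop eps n x) Fh h y w = iter n (conv gg) h x y.
Proof.
elim: n h => [|n IH] h Hh h1.
  have [H1 H2] := Hh.
  by rewrite /= big_seq1 /Fh /= /rho (linB (H1 y)) (linZ (H1 y)) h1 scaler0 subr0.
rewrite iterSr /= big_flatten big_map /= -IH; last 2 first.
- exact: conv_bil gg_bil Hh.
- by move=> z; apply: conv_gg1.
apply: eq_bigr => w _; rewrite big_map /Fh /=.
rewrite -red_sum //; rewrite /fl.
by rewrite -(lin_sum _ _ (fl_lin (behead w))).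
Qed.

Lemma iter_gg k : bilinear_map (iter k (conv gg) gg) /\ forall z, iter k (conv gg) gg one z = 0.
Proof.
elim: k => [|k [IH1 IH2]] /=; first by split; [exact: gg_bil | exact: gg1].
by split; [exact: conv_bil gg_bil IH1 | move=> z; apply: conv_gg1].
Qed.

Hypothesis CN : connected one cop eps.

Lemma Q_vanish x : exists N, forall m, (N <= m)%N -> forall y, Q m x y = 0.
Proof.
have [n Hn] := CN x; exists n.+1 => m Hm y.
rewrite -(subnK Hm) addnS /Q iterSr (conv_ee_r gg_bil) addnC iterD.
have [B1 B2] := iter_gg (m - n.+1).
rewrite -red_iter //.
by rewrite (Hn _ _ (Fh_ml y B1)) big_nil.
Qed.


Definition Nx x : nat := proj1_sig (constructive_indefinite_description _ (Q_vanish x)).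

Lemma NxP x m : (Nx x <= m)%N -> forall y, Q m x y = 0.
Proof. by rewrite /Nx; case: constructive_indefinite_description => N HN /=; exact: HN. Qed.

Definition dlt x y := \sum_(0 <= i < Nx x) (-1) ^+ i *: Q i x y.

Lemma dltE x y M : (Nx x <= M)%N -> dlt x y = \sum_(0 <= i < M) (-1) ^+ i *: Q i x y.
Proof.
rewrite /dlt; elim: M => [|M IH] HM.
  by move: HM; rewrite leqn0 => /eqP ->.
case: (leqP (Nx x) M) => HN.
  by rewrite big_nat_recr //= -IH // NxP // scaler0 addr0.
by have -> : Nx x = M.+1 by apply/eqP; rewrite eqn_leq HM HN.
Qed.

Lemma dlt_bil : bilinear_map dlt.
Proof.
split=> [y|x] a p q.
- set M := maxn (Nx (a *: p + q)) (maxn (Nx p) (Nx q)).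
  rewrite !(dltE _ _ (M := M)) ?leq_max ?leqnn ?orbT //.
  rewrite scaler_sumr -big_split; apply: eq_bigr => i _ /=.
  have [Q1 _] := Q_bil i.
  rewrite (linD (Q1 y)) (linZ (Q1 y)) scalerDr; congr (_ + _).
  by rewrite !scalerA mulrC.
- rewrite /dlt scaler_sumr -big_split; apply: eq_bigr => i _ /=.
  have [_ Q2] := Q_bil i.
  rewrite (linD (Q2 x)) (linZ (Q2 x)) scalerDr; congr (_ + _).
  by rewrite !scalerA mulrC.
Qed.

Lemma tele x y M : (Nx x <= M)%N ->
  \sum_(0 <= i < M) (-1) ^+ i *: (Q i x y + Q i.+1 x y) = eps x *: y.
Proof.
move=> HM.
rewrite (telescope_sumr_eq (fun k => - ((-1) ^+ k *: Q k x y))) //.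
  by rewrite NxP // scaler0 oppr0 sub0r expr0 scale1r opprK.
move=> k _; rewrite exprS mulN1r scaleNr opprK scalerDr addrC.
by rewrite opprK.
Qed.

Lemma dlt_R x y : \sum_(p <- cop x) tri p.2 (dlt p.1 y) = eps x *: y.
Proof.
set M := maxn (Nx x) (\max_(p <- cop x) Nx p.1).
transitivity (\sum_(p <- cop x) tri p.2 (\sum_(0 <= i < M) (-1) ^+ i *: Q i p.1 y)).
  apply: eq_big_seq => p Hp; rewrite (dltE _ _ (M := M)) // leq_max.
  by apply/orP; right; apply: (leq_bigmax_seq (F := fun p : H * H => Nx p.1)) Hp _.
rewrite -(tele y (M := M)) ?leq_max ?leqnn //.
under eq_bigr do rewrite (lin_sum _ _ (TR _)).
rewrite exchange_big /=; apply: eq_bigr => i _.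
have E : Q i x y = conv ee (Q i) x y by rewrite (conv_ee_l (Q_bil i)).
rewrite E -conv_triL /conv scaler_sumr; apply: eq_bigr => p _.
by rewrite (linZ (TR _)).
Qed.

Lemma dlt_L x y : \sum_(p <- cop x) dlt p.2 (tri p.1 y) = eps x *: y.
Proof.
set M := maxn (Nx x) (\max_(p <- cop x) Nx p.2).
transitivity (\sum_(p <- cop x) \sum_(0 <= i < M) (-1) ^+ i *: Q i p.2 (tri p.1 y)).
  apply: eq_big_seq => p Hp; rewrite (dltE _ _ (M := M)) // leq_max.
  by apply/orP; right; apply: (leq_bigmax_seq (F := fun p : H * H => Nx p.2)) Hp _.
rewrite -(tele y (M := M)) ?leq_max ?leqnn //.
rewrite exchange_big /=; apply: eq_bigr => i _.
have E : Q i x y = conv (Q i) ee x y by rewrite (conv_ee_r (Q_bil i)).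
have E2 : conv gg (Q i) x y = conv (Q i) gg x y by rewrite QR.
rewrite E E2 -(conv_triR _ _ (Q_bil i)) /conv scaler_sumr.
by apply: eq_bigr => p _.
Qed.


Lemma conn_delta : exists delta : H -> H -> H, bilinear_map delta /\
     (forall x y, \sum_(p <- cop_op cop x) tri p.1 (delta p.2 y) = eps x *: y) /\
     (forall x y, \sum_(p <- cop_op cop x) delta p.1 (tri p.2 y) = eps x *: y).
Proof.
exists dlt; split; first exact: dlt_bil.
by split=> x y; rewrite /cop_op big_map /=; [exact: dlt_R | exact: dlt_L].
Qed.

End Conn.

Unset Implicit Arguments.

Theorem proposition3p2 (K : fieldType) (H : lmodType K)
  (mul : H -> H -> H) (one : H) (cop : H -> seq (H * H)) (eps : H -> K)
  (tri : H -> H -> H) :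
  left_post_hopf mul one cop eps tri ->
  cocommutative cop \/ connected one cop eps ->
  right_post_hopf (fun x y => mul y x) one (cop_op cop) eps (fun x y => tri y x).
Proof.
move=> LP HC.
split; first exact: (op_hopf LP).
split; first exact: (op_morph LP).
split; first exact: (op_ax3 LP).
split; first exact: (op_ax4 LP).
case: HC => HC; [exact: (op_delta_cocom LP HC) | exact: (conn_delta LP HC)].
Qed.
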